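(* Let $n$ be sufficiently large and let $K_{2n+1}$ be ND-coloured. Let $x,y\in V(K_{2n+1})$ be distinct vertices, let $C\subseteq C(K_{2n+1})$ be a set of $100$ colours, and let $X\subseteq V(K_{2n+1})$ and $C'\subseteq C(K_{2n+1})$ satisfy $|X|\leq n/10^3$ and $|C'|\leq n/10^3$. Then there is a set $\bar{C}\subseteq C(K_{2n+1})\setminus (C\cup C')$ of $694$ colours and a set $\bar{X}\subseteq V(K_{2n+1})\setminus X$ of at most $1500$ vertices such that, for each $c\in C$, there is a $(\bar{C}\cup \{c\})$-rainbow $x,y$-path of length $695$ all of whose internal vertices lie in $\bar{X}$.
   Context: ND-colouring of $K_{2n+1}$: vertex set $\{0,\dots,2n\}$, edge $ij$ has colour $k\in\{1,\dots,n\}$ where $i-j\equiv\pm k\pmod{2n+1}$; $C(K_{2n+1})=\{1,\dots,n\}$. A graph is $D$-rainbow if its edges have distinct colours all in $D$. Length of a path is its number of edges. *)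

(* Defs.v *)
From mathcomp Require Import all_boot.
Set Implicit Arguments. Unset Strict Implicit. Unset Printing Implicit Defensive.

(* ND-colouring of K_{2n+1}: vertices are 'I_(2n+1); the edge ij gets the
   colour k in {1..n} with i - j = +-k (mod 2n+1). *)
Definition nd_col (n : nat) (i j : 'I_(2 * n + 1)) : nat :=
  let d := (i + (2 * n + 1) - j) %% (2 * n + 1) in minn d (2 * n + 1 - d).

Definition nd_colours (n : nat) : {set 'I_n.+1} := [set k : 'I_n.+1 | 0 < k].

Definition edges_of (T : Type) (p : seq T) : seq (T * T) := zip p (behead p).

Definition is_xy_path (n : nat) (x y : 'I_(2 * n + 1)) (p : seq 'I_(2 * n + 1)) : bool :=
  [&& p != [::], head x p == x, last x p == y & uniq p].

Definition path_length (T : Type) (p : seq T) : nat := (size p).-1.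

Definition internal_vertices (T : Type) (p : seq T) : seq T :=
  take (size p).-2 (behead p).

Definition path_colours (n : nat) (p : seq 'I_(2 * n + 1)) : seq nat :=
  [seq nd_col e.1 e.2 | e <- edges_of p].

Definition rainbow (n : nat) (D : {set 'I_n.+1}) (p : seq 'I_(2 * n + 1)) : bool :=
  uniq (path_colours p) &&
  all (fun k => k \in [seq val d | d <- enum D]) (path_colours p).

(* Main.v *)
Require Import Defs.
From mathcomp Require Import all_boot all_algebra.
From mathcomp Require Import zify ring.
Set Implicit Arguments. Unset Strict Implicit. Unset Printing Implicit Defensive.
Import GRing.Theory.

Section Basics.
Variable n : nat.
Hypothesis n_gt0 : 0 < n.
Local Notation m := (2 * n + 1).
Lemma m_gt1 : 1 < m. Proof. lia. Qed.
Local Notation Z := 'Z_m.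
Local Open Scope ring_scope.

Lemma valZ_lt (z : Z) : (val z < m)%N.
Proof. apply: leq_trans (ltn_ord z) _; by rewrite Zp_cast // m_gt1. Qed.

Lemma valN (k : nat) : (k%:R : Z) = (k %% m)%N :> nat.
Proof. by rewrite val_Zp_nat // m_gt1. Qed.

Definition ofZ (z : Z) : 'I_m := Ordinal (valZ_lt z).
Definition toZ (i : 'I_m) : Z := (val i)%:R.

Lemma ofZK i : ofZ (toZ i) = i.
Proof. apply: val_inj; rewrite /= valN modn_small //; exact: ltn_ord. Qed.
Lemma toZK z : toZ (ofZ z) = z.
Proof. by rewrite /toZ /= natr_Zp. Qed.
Lemma ofZ_inj : injective ofZ.
Proof. by move=> a b /(congr1 toZ); rewrite !toZK. Qed.

Definition fold (z : Z) : nat := minn (val z) (m - val z).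


Lemma mZ : (m%:R : Z) = 0.
Proof. by rewrite pchar_Zp // m_gt1. Qed.

Lemma subZ (u v : Z) : u - v = ((val u + m - val v)%N)%:R.
Proof.
rewrite -addnBA; last by apply: ltnW; apply: valZ_lt.
rewrite natrD natrB; last by apply: ltnW; apply: valZ_lt.
by rewrite mZ !natr_Zp add0r.
Qed.

Lemma nd_colZ (u v : Z) : nd_col (ofZ u) (ofZ v) = fold (u - v).
Proof. rewrite /nd_col /fold subZ /=. rewrite valN. done. Qed.

Lemma fold_opp z : fold (- z) = fold z.
Proof.
have -> : - z = 0 - z by rewrite add0r.
rewrite /fold subZ /= valN /=.
move: (valZ_lt z); move: (nat_of_ord z) => v lt.
case: v lt => [|v] lt.
  rewrite /= ?add0n ?subn0 ?addn0 ?modnn ?subnn; lia.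
rewrite add0n modn_small; last by lia.
lia.
Qed.

Lemma fold_le z : (fold z <= n)%N.
Proof. have := valZ_lt z; rewrite /fold; lia. Qed.

Lemma fold_eq z k : fold z = k -> z = k%:R \/ z = - (k%:R).
Proof.
rewrite /fold => e.
have lt := valZ_lt z.
case: (leqP (val z) (m - val z)) => h.
  left; have -> : k = val z by lia.
  by rewrite natr_Zp.
right; have -> : k = (m - val z)%N by lia.
rewrite natrB; last by lia.
by rewrite mZ natr_Zp sub0r opprK.
Qed.

Lemma fold_nat k : (k <= n)%N -> fold (k%:R) = k.
Proof. move=> le; rewrite /fold /= valN modn_small; lia. Qed.

Lemma fold0 z : fold z = 0%N -> z = 0.
Proof.
move=> /fold_eq [] ->; by rewrite ?oppr0.
Qed.

Lemma fold_neq0 z : z != 0 -> (0 < fold z)%N.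
Proof. move=> nz; rewrite lt0n; apply/eqP=> /fold0 e; by rewrite e eqxx in nz. Qed.

Definition hf : Z := (n.+1)%:R.
Lemma hf2 (z : Z) : hf * (z + z) = z.
Proof.
have e : (hf * 2) = 1.
  rewrite /hf -natrM.
  have -> : (n.+1 * 2 = m + 1)%N by lia.
  by rewrite natrD mZ add0r.
by rewrite -mulr2n -mulr_natr mulrA mulrC mulrA (mulrC 2) e mul1r.
Qed.

Lemma dbl0 (z : Z) : z + z = 0 -> z = 0.
Proof. by move=> e; rewrite -(hf2 z) e mulr0. Qed.


Lemma pick (S : seq Z) : (size S < m)%N -> exists z : Z, z \notin S.
Proof.
move=> lt; case: (pickP [pred z : Z | z \notin S]) => [z Hz | H]; first by exists z.
have : (#|Z| <= size S)%N.
  apply: leq_trans (card_size S); apply: subset_leq_card; apply/subsetP => z _.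
  by have := H z; rewrite /= => /negbFE.
rewrite card_ord => le; have := Zp_cast m_gt1; lia.
Qed.

Definition shf1 (a : Z) (L : seq Z) := [seq w - a | w <- L].
Definition shfm (a : Z) (L : seq Z) := [seq a - w | w <- L].
Definition badf (K : seq nat) : seq Z := [seq k%:R | k <- K] ++ [seq - k%:R | k <- K].

Lemma shf1P a L z : z + a \in L -> z \in shf1 a L.
Proof. move=> H; apply/mapP; exists (z + a) => //; by rewrite addrK. Qed.
Lemma shfmP a L z : a - z \in L -> z \in shfm a L.
Proof. move=> H; apply/mapP; exists (a - z) => //; by rewrite opprB addrC subrK. Qed.
Lemma badfP K w : fold w \in K -> w \in badf K.
Proof.
move=> H; rewrite mem_cat; case: (fold_eq (erefl (fold w))) => e.
  by apply/orP; left; apply/mapP; exists (fold w).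
by apply/orP; right; apply/mapP; exists (fold w).
Qed.
Lemma size_shf1 a L : size (shf1 a L) = size L. Proof. exact: size_map. Qed.
Lemma size_shfm a L : size (shfm a L) = size L. Proof. exact: size_map. Qed.
Lemma size_badf K : size (badf K) = (2 * size K)%N.
Proof. rewrite size_cat !size_map; lia. Qed.


Lemma fold_inj a b : fold a = fold b -> a = b \/ a = - b.
Proof.
move=> e; have h1 := fold_eq e; have h2 := fold_eq (erefl (fold b)).
move: h1 h2; move: (fold b) => k.
case=> ->; case=> ->.
- by left.
- by right; rewrite opprK.
- by right.
- by left.
Qed.

Lemma fold_zero : fold 0 = 0%N.
Proof. by rewrite /fold /= ?valN ?mod0n /=; apply/minn_idPl. Qed.

Lemma addr_eql (r a : Z) : (r + a == r) = (a == 0).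
Proof. by rewrite -{2}(addr0 r) (inj_eq (addrI r)). Qed.

Definition hh (c : nat) : Z := hf * c%:R.
Lemma hh2 c : hh c + hh c = c%:R.
Proof. by rewrite /hh -mulrDr hf2. Qed.
Lemma natZ_neq0 c : (0 < c <= n)%N -> (c%:R : Z) != 0.
Proof.
move=> /andP [c0 cn]; apply/eqP => e.
have := fold_nat cn; rewrite e fold_zero; lia.
Qed.
Lemma hh_neq0 c : (0 < c <= n)%N -> hh c != 0.
Proof.
move=> H; apply/eqP => e; have := natZ_neq0 H; by rewrite -hh2 e addr0 eqxx.
Qed.

Variables (x y : Z) (FK : seq nat) (XL : seq Z).
Hypothesis xy : x != y.
Hypothesis big : (3 * (910 + size XL) + 4 * (size FK + 700) + 20 < m)%N.

Definition UB (O : seq Z) : seq Z := x :: y :: O ++ XL.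
Definition KB (Q : seq nat) : seq nat := FK ++ Q.
Definition goodV (O : seq Z) := uniq (x :: y :: O) && all (fun v => v \notin XL) O.
Definition goodK (Q : seq nat) := uniq Q && all (fun k => [&& 0 < k, k <= n & k \notin FK]%N) Q.

Lemma UB1 O w v : (v \in UB (O ++ [:: w])) = (v == w) || (v \in UB O).
Proof.
rewrite /UB !in_cons -catA /= !mem_cat !in_cons.
by case: (v == x); case: (v == y); case: (v == w); case: (v \in O).
Qed.
Lemma KB1 Q j k : (k \in KB (Q ++ [:: j])) = (k == j) || (k \in KB Q).
Proof.
rewrite /KB catA mem_cat in_cons in_nil orbF orbC //.
Qed.

Lemma goodV1 O v : goodV O -> v \notin UB O -> goodV (O ++ [:: v]).
Proof.
rewrite /goodV => /andP [u a] H.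
have eU : UB O = (x :: y :: O) ++ XL by [].
rewrite eU mem_cat negb_or in H; case/andP: H => H1 H2.
apply/andP; split; last by rewrite all_cat a /= H2.
have -> : x :: y :: O ++ [:: v] = rcons (x :: y :: O) v by rewrite cats1.
by rewrite rcons_uniq u H1.
Qed.

Lemma goodK1 Q k : goodK Q -> (0 < k)%N -> (k <= n)%N -> k \notin KB Q ->
  goodK (Q ++ [:: k]).
Proof.
rewrite /goodK /KB => /andP [u a] k0 kn.
rewrite mem_cat negb_or => /andP [kF kQ].
apply/andP; split; last by rewrite all_cat a /= k0 kn kF.
by rewrite cats1 rcons_uniq u kQ.
Qed.

Lemma goodV_perm O L L' : perm_eq L L' -> goodV (O ++ L) = goodV (O ++ L').
Proof.
move=> pL; rewrite /goodV.
have pe : perm_eq (x :: y :: O ++ L) (x :: y :: O ++ L').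
  by rewrite !perm_cons perm_cat2l.
rewrite (perm_uniq pe); congr (_ && _).
by apply: perm_all; rewrite perm_cat2l.
Qed.

Lemma notin_shf1 a L z : z \notin shf1 a L -> z + a \notin L.
Proof. by apply: contra; apply: shf1P. Qed.
Lemma notin_shfm a L z : z \notin shfm a L -> a - z \notin L.
Proof. by apply: contra; apply: shfmP. Qed.
Lemma notin_badf K w : w \notin badf K -> fold w \notin K.
Proof. by apply: contra; apply: badfP. Qed.


Lemma size_nil1 (T : Type) : size (@nil T) = 0%N. Proof. by []. Qed.
Lemma size_cons1 (T : Type) (a : T) s : size (a :: s) = (size s).+1. Proof. by []. Qed.

Lemma notin_cat (T : eqType) (a : T) s1 s2 : a \notin s1 ++ s2 -> a \notin s1 /\ a \notin s2.
Proof. by rewrite mem_cat negb_or => /andP. Qed.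

Lemma inUB O L v : v \in L -> v \in UB (O ++ L).
Proof. by rewrite /UB !in_cons !mem_cat => ->; rewrite !orbT. Qed.

Lemma inUB_x O p : p \in x :: O -> p \in UB O.
Proof.
rewrite /UB !in_cons mem_cat => /orP [->|->] //; by rewrite !orbT.
Qed.

Lemma gstep (c : nat) (p : Z) (O : seq Z) (Q : seq nat) : (0 < c <= n)%N -> goodV O -> goodK Q -> p \in x :: O ->
  (size O + 5 <= 910)%N -> (size Q + 3 <= 700)%N ->
  exists r A, goodV (O ++ [:: r; r - A; r - hh c; r + A; r + hh c]) /\
              goodK (Q ++ [:: fold (p - r); fold A; fold (hh c - A)]).
Proof.
move=> hc gO gQ pO sO sQ.
have hn := hh_neq0 hc.
have h2n : hh c + hh c != 0 by rewrite hh2 natZ_neq0.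
move: hn h2n; set h := hh c => hn h2n.
have pU := inUB_x pO.
have [r Hr] : exists z : Z, z \notin (UB O ++ shf1 (- h) (UB O) ++ shf1 h (UB O) ++ shfm p (badf (KB Q))).
  apply: pick; rewrite /shf1 /shfm /badf /UB /KB !(size_cat, size_map, size_cons1, size_nil1); move: sO sQ big; set a1 := size O; set a2 := size XL; set a3 := size FK; set a4 := size Q; move=> H1 H2 H3; clear -H1 H2 H3; lia.
case/notin_cat: Hr => r1 /notin_cat [r2 /notin_cat [r3 r4]].
have r2' := notin_shf1 r2.
have r3' := notin_shf1 r3.
have r4' := notin_badf (notin_shfm r4).
have rp : r != p by apply: contraNneq r1 => ->.
set O1 := O ++ [:: r; r - h; r + h].
have gO1 : goodV O1.
  have -> : O1 = ((O ++ [:: r]) ++ [:: r - h]) ++ [:: r + h] by rewrite /O1 -!catA.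
  apply: goodV1; first apply: goodV1; first exact: goodV1.
  - rewrite UB1; apply/norP; split; last exact: r2'.
    by rewrite addr_eql oppr_eq0.
  - rewrite !UB1; apply/norP; split; last (apply/norP; split; last exact: r3').
      by rewrite (inj_eq (addrI r)) -addr_eq0.
    by rewrite addr_eql.
set Q1 := Q ++ [:: fold (p - r)].
have gQ1 : goodK Q1.
  apply: goodK1 => //; last exact: fold_le.
  by apply: fold_neq0; rewrite subr_eq0 eq_sym.
have [A HA] : exists z : Z, z \notin (shf1 r (UB O1) ++ shfm r (UB O1) ++ badf (KB Q1) ++
                      shfm h (badf (KB Q1)) ++ [:: hf * h]).
  apply: pick; rewrite /shf1 /shfm /badf /UB /KB /Q1 /O1 !(size_cat, size_map, size_cons1, size_nil1); move: sO sQ big; set a1 := size O; set a2 := size XL; set a3 := size FK; set a4 := size Q; move=> H1 H2 H3; clear -H1 H2 H3; lia.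
case/notin_cat: HA => a1 /notin_cat [a2 /notin_cat [a3 /notin_cat [a4 a5]]].
rewrite in_cons in_nil orbF in a5.
have a1' : r + A \notin UB O1 by rewrite addrC; apply: notin_shf1.
have a2' := notin_shfm a2.
have a3' := notin_badf a3.
have a4' := notin_badf (notin_shfm a4).
have A0 : A != 0.
  apply: contraNneq a1' => ->; rewrite addr0; apply: inUB; by rewrite in_cons eqxx.
have hA : h - A != 0.
  rewrite subr_eq0; apply: contraNneq a1' => <-; apply: inUB; by rewrite !in_cons eqxx !orbT.
have gO2 : goodV (O1 ++ [:: r - A; r + A]).
  rewrite -(cat1s (r - A)) catA; apply: goodV1; first exact: goodV1.
  rewrite UB1 negb_or a1' andbT (inj_eq (addrI r)) -addr_eq0.
  by apply/negP => /eqP /dbl0 e; rewrite e eqxx in A0.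
exists r, A; split.
  rewrite (@goodV_perm O _ [:: r; r - h; r + h; r - A; r + A]); first by rewrite /O1 -catA in gO2.
  apply/permP => P /=; move: (P r) (P (r - h)) (P (r + h)) (P (r - A)) (P (r + A)) => b1 b2 b3 b4 b5; clear; lia.
have -> : Q ++ [:: fold (p - r); fold A; fold (h - A)] =
          (Q1 ++ [:: fold A]) ++ [:: fold (h - A)] by rewrite /Q1 -!catA.
apply: goodK1; first apply: goodK1 => //.
- exact: fold_neq0.
- exact: fold_le.
- exact: fold_neq0.
- exact: fold_le.
rewrite KB1 negb_or a4' andbT.
apply/eqP => /fold_inj [] e.
  have e2 : h = A + A by rewrite -{1}e subrK.
  by move: a5; rewrite e2 hf2 eqxx.
have e2 : h = 0 by rewrite -(subrK A h) e addNr.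
by rewrite e2 eqxx in hn.
Qed.


Fixpoint gobjV (gs : seq (nat * Z * Z)) : seq Z :=
  match gs with
  | [::] => [::]
  | (c, r, A) :: gs' => [:: r; r - A; r - hh c; r + A; r + hh c] ++ gobjV gs'
  end.
Fixpoint gobjK (p : Z) (gs : seq (nat * Z * Z)) : seq nat :=
  match gs with
  | [::] => [::]
  | (c, r, A) :: gs' => [:: fold (p - r); fold A; fold (hh c - A)] ++ gobjK (r + hh c) gs'
  end.
Fixpoint gend (p : Z) (gs : seq (nat * Z * Z)) : Z :=
  match gs with
  | [::] => p
  | (c, r, A) :: gs' => gend (r + hh c) gs'
  end.

Definition fst3 (g : nat * Z * Z) : nat := g.1.1.

Lemma phase1 (cs : seq nat) : forall (p : Z) (O : seq Z) (Q : seq nat),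
  all (fun c => (0 < c <= n)%N) cs -> goodV O -> goodK Q -> p \in x :: O ->
  (size O + 5 * size cs <= 910)%N -> (size Q + 3 * size cs <= 700)%N ->
  exists gs, [/\ map fst3 gs = cs, goodV (O ++ gobjV gs),
     goodK (Q ++ gobjK p gs) & gend p gs \in x :: O ++ gobjV gs].
Proof.
elim: cs => [|c cs IH] p O Q.
  move=> _ gO gQ pO _ _; exists [::]; by rewrite /= !cats0.
move=> /= /andP [hc hcs] gO gQ pO sO sQ.
have [r [A [g1 g2]]] := gstep hc gO gQ pO ltac:(lia) ltac:(lia).
have pO' : r + hh c \in x :: O ++ [:: r; r - A; r - hh c; r + A; r + hh c].
  by rewrite in_cons mem_cat !in_cons eqxx !orbT.
have [gs [e1 e2 e3 e4]] := IH _ _ _ hcs g1 g2 pO'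
   ltac:(rewrite size_cat /=; lia) ltac:(rewrite size_cat /=; lia).
have EV : O ++ gobjV ((c, r, A) :: gs) =
   (O ++ [:: r; r - A; r - hh c; r + A; r + hh c]) ++ gobjV gs by rewrite -catA.
have EK : Q ++ gobjK p ((c, r, A) :: gs) =
   (Q ++ [:: fold (p - r); fold A; fold (hh c - A)]) ++ gobjK (r + hh c) gs by rewrite -catA.
exists ((c, r, A) :: gs); split.
- by rewrite /= e1.
- by rewrite EV.
- by rewrite EK.
- by rewrite EV.
Qed.

Definition zcols (l : seq Z) : seq nat := [seq fold (e.1 - e.2) | e <- zip l (behead l)].

Lemma fstep_last (p : Z) (O : seq Z) (Q : seq nat) :
  goodV O -> goodK Q -> p \in x :: O ->
  (size O + 1 <= 910)%N -> (size Q + 2 <= 700)%N ->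
  exists v, goodV (O ++ [:: v]) /\ goodK (Q ++ [:: fold (p - v); fold (v - y)]).
Proof.
move=> gO gQ pO sO sQ.
have pU := inUB_x pO.
have py : p != y.
  move: gO => /andP [u _].
  have yO : y \notin O by move: u; rewrite /= => /and3P [_ ? _].
  move: pO; rewrite in_cons => /orP [/eqP -> //|pO].
  by apply: contraNneq yO => <-.
have [v Hv] : exists z : Z, z \notin (UB O ++ shfm p (badf (KB Q)) ++
                shf1 (- y) (badf (KB Q)) ++ [:: hf * (p + y)]).
  apply: pick; rewrite /shf1 /shfm /badf /UB /KB !(size_cat, size_map, size_cons1, size_nil1).
  move: sO sQ big; set a1 := size O; set a2 := size XL; set a3 := size FK; set a4 := size Q.
  move=> H1 H2 H3; clear -H1 H2 H3; lia.
case/notin_cat: Hv => v1 /notin_cat [v2 /notin_cat [v3 v4]].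
rewrite in_cons in_nil orbF in v4.
have v2' := notin_badf (notin_shfm v2).
have v3' := notin_badf (notin_shf1 v3).
have vp : v != p by apply: contraNneq v1 => ->.
have vy : v != y by apply: contraNneq v1 => ->; rewrite /UB !in_cons eqxx orbT.
exists v; split; first exact: goodV1.
rewrite -(cat1s _ [:: _]) catA; apply: goodK1; first apply: goodK1 => //.
- by apply: fold_neq0; rewrite subr_eq0 eq_sym.
- exact: fold_le.
- by apply: fold_neq0; rewrite subr_eq0.
- exact: fold_le.
rewrite KB1; apply/norP; split; last exact: v3'.
apply/eqP => /fold_inj [] e.
  have h0 : v + v - (p + y) = (v - y) - (p - v) by ring.
  have e2 : v + v = p + y by apply/eqP; rewrite -subr_eq0 h0 e subrr.
  by move: v4; rewrite -e2 hf2 eqxx.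
have h0 : p - y = (v - y) + (p - v) by ring.
have : p - y == 0 by rewrite h0 e addNr.
by rewrite subr_eq0 (negbTE py).
Qed.

Lemma fstep (p : Z) (O : seq Z) (Q : seq nat) :
  goodV O -> goodK Q -> p \in x :: O ->
  (size O + 1 <= 910)%N -> (size Q + 1 <= 700)%N ->
  exists v, goodV (O ++ [:: v]) /\ goodK (Q ++ [:: fold (p - v)]).
Proof.
move=> gO gQ pO sO sQ.
have pU := inUB_x pO.
have [v Hv] : exists z : Z, z \notin (UB O ++ shfm p (badf (KB Q))).
  apply: pick; rewrite /shf1 /shfm /badf /UB /KB !(size_cat, size_map, size_cons1, size_nil1).
  move: sO sQ big; set a1 := size O; set a2 := size XL; set a3 := size FK; set a4 := size Q.
  move=> H1 H2 H3; clear -H1 H2 H3; lia.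
case/notin_cat: Hv => v1 v2.
have v2' := notin_badf (notin_shfm v2).
have vp : v != p by apply: contraNneq v1 => ->.
exists v; split; first exact: goodV1.
apply: goodK1 => //; last exact: fold_le.
by apply: fold_neq0; rewrite subr_eq0 eq_sym.
Qed.

Lemma phase2 (k : nat) : forall (p : Z) (O : seq Z) (Q : seq nat),
  goodV O -> goodK Q -> p \in x :: O ->
  (size O + k.+1 <= 910)%N -> (size Q + k.+2 <= 700)%N ->
  exists vs, [/\ size vs = k.+1, goodV (O ++ vs) & goodK (Q ++ zcols (p :: vs ++ [:: y]))].
Proof.
elim: k => [|k IH] p O Q gO gQ pO sO sQ.
  have [v [g1 g2]] := fstep_last gO gQ pO ltac:(lia) ltac:(lia).
  by exists [:: v].
have [v [g1 g2]] := fstep gO gQ pO ltac:(lia) ltac:(lia).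
have pv : v \in x :: O ++ [:: v] by rewrite in_cons mem_cat in_cons eqxx !orbT.
have [vs [e1 e2 e3]] := IH _ _ _ g1 g2 pv ltac:(rewrite size_cat /=; lia) ltac:(rewrite size_cat /=; lia).
exists (v :: vs); split.
- by rewrite /= e1.
- by rewrite -cat1s catA.
- have -> : zcols (p :: (v :: vs) ++ [:: y]) = fold (p - v) :: zcols (v :: vs ++ [:: y]) by [].
  by rewrite -cat1s catA.
Qed.



Fixpoint gpath (c0 : nat) (gs : seq (nat * Z * Z)) : seq Z :=
  match gs with
  | [::] => [::]
  | (c, r, A) :: gs' =>
      r :: (if c == c0 then [:: r - A; r - hh c] else [:: r + A]) ++ r + hh c :: gpath c0 gs'
  end.
Fixpoint gcols (c0 : nat) (p : Z) (gs : seq (nat * Z * Z)) : seq nat :=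
  match gs with
  | [::] => [::]
  | (c, r, A) :: gs' => [:: fold (p - r); fold A; fold (hh c - A)] ++
      (if c == c0 then [:: c] else [::]) ++ gcols c0 (r + hh c) gs'
  end.

Lemma zcons a b s : zcols (a :: b :: s) = fold (a - b) :: zcols (b :: s).
Proof. by []. Qed.

Lemma zcols_g c0 gs : forall (p : Z) (t : seq Z),
  all (fun c => (0 < c <= n)%N) (map fst3 gs) ->
  zcols (p :: gpath c0 gs ++ t) = gcols c0 p gs ++ zcols (gend p gs :: t).
Proof.
elim: gs => [|[[c r] A] gs IH] p t //=.
case/andP => /andP [c0' cn] H.
have E1 : r - (r - A) = A by ring.
have E2 : r - A - (r - hh c) = hh c - A by ring.
have E3 : r - hh c - (r + hh c) = - (hh c + hh c) by ring.
have E4 : r - (r + A) = - A by ring.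
have E5 : r + A - (r + hh c) = - (hh c - A) by ring.
case: ifP => _ /=.
  rewrite !zcons IH // E1 E2 E3 fold_opp hh2 fold_nat //.
rewrite !zcons IH // E4 E5 !fold_opp //.
Qed.

Lemma gcols_notin c0 gs : forall p, c0 \notin map fst3 gs -> gcols c0 p gs = gobjK p gs.
Proof.
elim: gs => [|[[c r] A] gs IH] p //=.
rewrite in_cons negb_or => /andP [ne H].
by rewrite eq_sym (negbTE ne) /= IH.
Qed.

Lemma perm3 (T : eqType) (a b d e : T) L L' : perm_eq L (e :: L') ->
  perm_eq (a :: b :: d :: L) (e :: a :: b :: d :: L').
Proof.
move=> H; apply: perm_trans (_ : perm_eq _ (a :: b :: d :: e :: L')) _.
  by rewrite !perm_cons.
by rewrite -[X in perm_eq X _]/([:: a; b; d] ++ [:: e] ++ L') perm_catCA.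
Qed.

Lemma gcols_perm c0 gs : forall p, uniq (map fst3 gs) -> c0 \in map fst3 gs ->
  perm_eq (gcols c0 p gs) (c0 :: gobjK p gs).
Proof.
elim: gs => [|[[c r] A] gs IH] p //=.
case/andP => cn u; rewrite in_cons => /orP [/eqP e|H].
  subst c0; rewrite eqxx gcols_notin //; apply: perm3; exact: perm_refl.
have ne : (c == c0) = false by apply/eqP => e; subst c0; rewrite H in cn.
rewrite ne /=; apply: perm3; exact: IH.
Qed.

Lemma size_gpath c0 gs : size (gpath c0 gs) = (3 * size gs + count (pred1 c0) (map fst3 gs))%N.
Proof.
elim: gs => [|[[c r] A] gs IH] //=.
case: ifP => /= e; rewrite IH ?e /=; move: (size gs) (count_mem c0 [seq fst3 i | i <- gs]) => a b; lia.
Qed.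

Lemma size_gobjV gs : size (gobjV gs) = (5 * size gs)%N.
Proof. elim: gs => [|[[c r] A] gs IH] //=; rewrite IH; lia. Qed.

Lemma size_gobjK gs : forall p, size (gobjK p gs) = (3 * size gs)%N.
Proof. elim: gs => [|[[c r] A] gs IH] p //=; rewrite IH; lia. Qed.

Lemma size_zcols a s : size (zcols (a :: s)) = size s.
Proof. by rewrite /zcols size_map size_zip /=; apply/minn_idPr; exact: leqnSn. Qed.

Lemma subseq_skip (T : eqType) (a : T) s1 s2 : subseq s1 s2 -> subseq s1 (a :: s2).
Proof. move=> H; apply: subseq_trans H _; exact: subseq_cons. Qed.
Lemma subseq_keep (T : eqType) (a : T) s1 s2 : subseq s1 s2 -> subseq (a :: s1) (a :: s2).
Proof. by rewrite /= eqxx. Qed.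

Lemma gpath_subseq c0 gs : subseq (gpath c0 gs) (gobjV gs).
Proof.
elim: gs => [|[[c r] A] gs IH] //.
have -> : gobjV ((c,r,A)::gs) = r :: r - A :: r - hh c :: r + A :: r + hh c :: gobjV gs by [].
case E: (c == c0).
  have -> : gpath c0 ((c, r, A) :: gs) = r :: r - A :: r - hh c :: r + hh c :: gpath c0 gs by rewrite /= E.
  by do 3 apply: subseq_keep; apply: subseq_skip; apply: subseq_keep.
have -> : gpath c0 ((c, r, A) :: gs) = r :: r + A :: r + hh c :: gpath c0 gs by rewrite /= E.
by apply: subseq_keep; do 2 apply: subseq_skip; do 2 apply: subseq_keep.
Qed.


Lemma assemble (cs : seq nat) : size cs = 100%N -> all (fun c => (0 < c <= n)%N) cs ->
  exists gs vs, [/\ map fst3 gs = cs, size vs = 393%N, goodV (gobjV gs ++ vs) &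
     goodK (gobjK x gs ++ zcols (gend x gs :: vs ++ [:: y]))].
Proof.
move=> s a.
have g0 : goodV [::] by rewrite /goodV /= inE xy.
have k0 : goodK [::] by [].
have [gs [e1 e2 e3 e4]] := @phase1 cs x [::] [::] a g0 k0 (mem_head x [::])
   ltac:(rewrite /= s; lia) ltac:(rewrite /= s; lia).
have sg : size gs = 100%N by rewrite -(size_map fst3) e1.
have [vs [f1 f2 f3]] := @phase2 392 (gend x gs) (gobjV gs) (gobjK x gs) e2 e3 e4
   ltac:(rewrite size_gobjV sg; lia) ltac:(rewrite size_gobjK sg; lia).
by exists gs, vs.
Qed.

End Basics.

Lemma pcons n (a b : 'I_(2 * n + 1)) s :
  path_colours (a :: b :: s) = nd_col a b :: path_colours (b :: s).
Proof. by []. Qed.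

Lemma pc_map n (n0 : (0 < n)%N) (l : seq 'Z_(2 * n + 1)) :
  path_colours (map (ofZ n0) l) = zcols l.
Proof.
elim: l => [|a [|b l] IH] //.
by rewrite map_cons map_cons pcons -map_cons IH nd_colZ.
Qed.


Lemma uniq_move (T : eqType) (a b : T) (W : seq T) :
  uniq (a :: b :: W) -> uniq (a :: W ++ [:: b]).
Proof.
move=> H; have P : perm_eq (a :: b :: W) (a :: W ++ [:: b]).
  by rewrite perm_cons -cat1s perm_catC.
by rewrite -(perm_uniq P).
Qed.

Theorem lemma5p3 :
  exists N : nat, forall n : nat, N <= n ->
  forall (x y : 'I_(2 * n + 1)), x != y ->
  forall (C C' : {set 'I_n.+1}) (X : {set 'I_(2 * n + 1)}),
    C \subset nd_colours n -> #|C| = 100 ->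
    C' \subset nd_colours n -> 1000 * #|C'| <= n ->
    1000 * #|X| <= n ->
  exists (Cbar : {set 'I_n.+1}) (Xbar : {set 'I_(2 * n + 1)}),
    [/\ Cbar \subset nd_colours n :\: (C :|: C'), #|Cbar| = 694,
        Xbar \subset ~: X, #|Xbar| <= 1500 &
        forall c, c \in C ->
          exists p : seq 'I_(2 * n + 1),
            [/\ is_xy_path x y p, path_length p = 695,
                rainbow (c |: Cbar) p &
                all (fun v => v \in Xbar) (internal_vertices p)]].
Proof.
exists (5 * 1000) => n Hn x y xy C C' X HC C100 HC' C'b Xb.
have n0 : (0 < n)%N by lia.
pose xZ := toZ x. pose yZ := toZ y.
pose FK := [seq val k | k <- enum (C :|: C')].
pose XL := [seq toZ v | v <- enum X].
have xyZ : xZ != yZ.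
  apply: contra xy => /eqP e; apply/eqP.
  by rewrite -(ofZK n0 x) -(ofZK n0 y) -/xZ -/yZ e.
have big : (3 * (910 + size XL) + 4 * (size FK + 700) + 20 < 2 * n + 1)%N.
  rewrite /XL /FK !size_map -!cardE cardsU; move: C100 C'b Xb Hn; set a1 := #|X|; set a2 := #|C|; set a3 := #|C'|; set a4 := #|C :&: C'|; move=> H1 H2 H3 H4; clear -H1 H2 H3 H4; lia.
pose cs := [seq val k | k <- enum C].
have scs : size cs = 100 by rewrite size_map -cardE.
have ucs : uniq cs by rewrite map_inj_uniq ?enum_uniq //; exact: val_inj.
have acs : all (fun c => (0 < c <= n)%N) cs.
  apply/allP => k /mapP [c cC ->]; rewrite mem_enum in cC.
  have := subsetP HC c cC; rewrite inE => ->; by rewrite -ltnS ltn_ord.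
have [gs [vs [e1 e2 e3 e4]]] := assemble n0 xyZ big scs acs.
have sg : size gs = 100 by rewrite -(size_map (@fst3 n)) e1.
pose Kall := gobjK xZ gs ++ zcols (gend xZ gs :: vs ++ [:: yZ]).
move: e3 e4; rewrite /goodV /goodK -/Kall => /andP [uV aV] /andP [uK aK].
pose Cbar := [set k in pmap insub Kall] : {set 'I_n.+1}.
pose Xbar := [set v in map (ofZ n0) (gobjV gs ++ vs)] : {set 'I_(2 * n + 1)}.
have sub0 c0 : subseq (gpath c0 gs ++ vs) (gobjV gs ++ vs).
  by apply: cat_subseq; [exact: gpath_subseq | exact: subseq_refl].
exists Cbar, Xbar; split.
- apply/subsetP => k; rewrite inE mem_pmap_sub => kK.
  have /and3P [k0 kn kF] := allP aK _ kK.
  rewrite in_setD !inE k0 andbT.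
  apply: contra kF => H; apply/mapP; exists k => //; by rewrite mem_enum inE.
- have uPm : uniq (pmap insub Kall : seq 'I_n.+1) by apply: pmap_sub_uniq.
  rewrite cardsE (card_uniqP uPm) size_pmap_sub.
  have -> : count (fun k => k < n.+1)%N Kall = size Kall.
    apply/eqP; rewrite -all_count; apply/allP => k kK.
    by have /and3P [_ kn _] := allP aK _ kK.
  by rewrite size_cat (size_gobjK n0 xyZ big) size_zcols size_cat /= sg e2.
- apply/subsetP => v; rewrite inE => /mapP [w wV ->]; rewrite inE.
  have := allP aV w wV; apply: contra => H; apply/mapP; exists (ofZ n0 w).
    by rewrite mem_enum.
  by rewrite toZK.
- rewrite cardsE; apply: leq_trans (card_size _) _.
  by rewrite size_map size_cat (size_gobjV n0 xyZ big) sg e2.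
move=> c cC.
pose c0 := val c.
pose M := gpath c0 gs ++ vs.
have c0cs : c0 \in cs by apply: map_f; rewrite mem_enum.
exists (map (ofZ n0) (xZ :: M ++ [:: yZ])); split.
- rewrite /is_xy_path; apply/and4P; split => //.
  + by rewrite /= ofZK.
  + by rewrite /= last_map last_cat /= ofZK.
  + rewrite (map_inj_uniq (@ofZ_inj n n0)).
    apply: (@subseq_uniq _ _ (xZ :: (gobjV gs ++ vs) ++ [:: yZ])); last exact: uniq_move.
    by rewrite /= eqxx; apply: cat_subseq; [exact: sub0 | exact: subseq_refl].
- rewrite /path_length size_map /= size_cat /M size_cat (size_gpath n0 xyZ big) sg e1.
  by rewrite (count_uniq_mem _ ucs) c0cs e2.
- rewrite /rainbow pc_map /M -catA (zcols_g n0) ?e1 //.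
  have P : perm_eq (gcols c0 xZ gs ++ zcols (gend xZ gs :: vs ++ [:: yZ])) (c0 :: Kall).
    have -> : c0 :: Kall = (c0 :: gobjK xZ gs) ++ zcols (gend xZ gs :: vs ++ [:: yZ]) by [].
    by rewrite perm_cat2r; apply: gcols_perm; rewrite e1.
  have c0K : c0 \notin Kall.
    apply/negP => H; have /and3P [_ _ /negP] := allP aK _ H; apply.
    by apply/mapP; exists c => //; rewrite mem_enum !inE cC.
  rewrite (perm_uniq P) /= c0K uK /=.
  apply/allP => k; rewrite (perm_mem P) in_cons => /orP [/eqP ->|kK].
    by apply/mapP; exists c => //; rewrite mem_enum setU11.
  have /and3P [_ kn _] := allP aK _ kK.
  have kn' : (k < n.+1)%N by [].
  apply/mapP; exists (Ordinal kn') => //.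
  by rewrite mem_enum !inE mem_pmap_sub /= kK orbT.
- rewrite /internal_vertices.
  have -> : (size (map (ofZ n0) (xZ :: M ++ [:: yZ]))).-2 = size M.
    by rewrite size_map /= size_cat /= addn1.
  rewrite [behead _]/= -map_take take_size_cat //.
  apply/allP => v /mapP [w wM ->]; rewrite inE; apply: map_f.
  exact: (mem_subseq (sub0 c0)).
Qed.
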